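(* Let $n\ge q\ge1$ be integers, $\lambda\in(0,1)$, and $r=\lceil n/q\rceil$. Then \[ \frac{r-(r-1)\lambda}{r} \;\ge\; \eta_\lambda(n,q) \;\ge\; \frac{r-(r-1)\lambda}{r+\lambda}. \] Furthermore, the graph $G$ on vertex set $[n]$ in which distinct $i,j$ are adjacent if and only if $i\equiv j \pmod r$ (so $G$ is a disjoint union of $r$ cliques and $\overline{P}(G;i)=\lceil i/r\rceil$) belongs to $\mathcal{G}_{n,q}$ and satisfies $\gamma_\lambda(G)\ge\frac{r-(r-1)\lambda}{r+\lambda}$.
   Context: For a finite base set $S$ and $f:2^S\to\mathbb{R}_{\ge0}$, write $f(A\mid B)=f(A\cup B)-f(B)$. $f$ is normalized if $f(\emptyset)=0$, monotone if $f(\{e\}\mid A)\ge0$ for all $e,A$, submodular if $f(\{e\}\mid A)\ge f(\{e\}\mid B)$ for $A\subseteq B\subseteq S$, $e\in S\setminus B$. Such $f$ has total curvature $\lambda\in(0,1)$ if $f(\{e\}\mid A)\ge(1-\lambda)f(\{e\})$ for all $e\in S$ and $A\subseteq S\setminus\{e\}$; $\mathcal{F}_\lambda$ is the set of normalized, monotone, submodular functions with total curvature $\lambda$. There are $n$ agents $[n]$ with decision sets $X_i\subseteq S$ forming a partition of $S$; action profiles $x\in X=X_1\times\cdots\times X_n$ are valued by $f(x)=f(\{x_1,\dots,x_n\})$, and $x_M=\{x_i:i\in M\}$. Let $x^{\mathrm{opt}}\in\arg\max_{x\in X}f(x)$. Given an undirected graph $G=([n],E)$ (information graph), let $\mathcal{N}_i=\{j<i:(j,i)\in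 E\}$. The generalized greedy algorithm produces $x^{\mathrm{sol}}$ with $x^{\mathrm{sol}}_i\in\arg\max_{x_i\in X_i}f(x_i\mid x^{\mathrm{sol}}_{\mathcal{N}_i})$, taking the worst among all possible greedy outcomes. Define $\gamma(f,X,G)=f(x^{\mathrm{sol}})/f(x^{\mathrm{opt}})$ and $\gamma_\lambda(G)=\inf_{f\in\mathcal{F}_\lambda,X}\gamma(f,X,G)$. Define recursively $\overline{P}(G;i)=1$ if $\mathcal{N}_i=\emptyset$ and $\overline{P}(G;i)=1+\max_{j\in\mathcal{N}_i}\overline{P}(G;j)$ otherwise; let $\mathcal{G}_{n,q}$ be the set of graphs on $[n]$ with $\max_i\overline{P}(G;i)\le q$, and $\eta_\lambda(n,q)=\sup_{G\in\mathcal{G}_{n,q}}\gamma_\lambda(G)$. *)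

(* Defs.v *)
From HB Require Import structures.
From mathcomp Require Import classical_sets reals.
From mathcomp Require Import all_boot all_order all_algebra.
Set Implicit Arguments. Unset Strict Implicit. Unset Printing Implicit Defensive.
Import Order.TTheory GRing.Theory Num.Theory.
Local Open Scope ring_scope.


Section SetFunctions.
Variables (R : realType) (S : finType).
Implicit Types (f : {set S} -> R) (A B : {set S}).

Definition marg f A B : R := f (A :|: B) - f B.

Definition nonnegf f := forall A, 0 <= f A.
Definition normalized f := f set0 = 0.
Definition monotone f := forall (e : S) A, 0 <= marg f [set e] A.
Definition submodular f :=
  forall A B (e : S), A \subset B -> e \notin B -> marg f [set e] B <= marg f [set e] A.
Definition total_curvature (lam : R) f :=
  forall (e : S) A, e \notin A -> (1 - lam) * f [set e] <= marg f [set e] A.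

Definition in_F (lam : R) f :=
  [/\ nonnegf f, normalized f, monotone f, submodular f & total_curvature lam f].

(* agents 'I_n (agent k corresponds to k+1 in [n]); decision sets partition S *)
Definition is_partition n (X : 'I_n -> {set S}) :=
  [/\ forall i, X i != set0,
      forall i j, i != j -> [disjoint X i & X j]
    & forall e : S, exists i, e \in X i].

Definition is_profile n (X : 'I_n -> {set S}) (x : {ffun 'I_n -> S}) :=
  [forall i, x i \in X i].

Definition xset n (x : {ffun 'I_n -> S}) (M : {set 'I_n}) : {set S} :=
  [set x i | i in M].

Definition fval n f (x : {ffun 'I_n -> S}) : R := f (xset x setT).

Definition fopt n f (X : 'I_n -> {set S}) : R :=
  \big[Num.max/0]_(x : {ffun 'I_n -> S} | is_profile X x) fval f x.

End SetFunctions.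

Definition is_graph n (e : rel 'I_n) := symmetric e /\ irreflexive e.

Definition nbrs n (e : rel 'I_n) (i : 'I_n) : {set 'I_n} :=
  [set j : 'I_n | (j < i)%N && e j i].

Definition is_greedy (R : realType) (S : finType) n (f : {set S} -> R)
    (X : 'I_n -> {set S}) (e : rel 'I_n) (x : {ffun 'I_n -> S}) :=
  is_profile X x /\
  forall i (y : S), y \in X i ->
    marg f [set y] (xset x (nbrs e i)) <= marg f [set x i] (xset x (nbrs e i)).

Definition gamma_fXG (R : realType) (S : finType) n (f : {set S} -> R)
    (X : 'I_n -> {set S}) (e : rel 'I_n) : R :=
  inf [set fval f x / fopt f X | x in [set x | is_greedy f X e x]]%classic.

(* gamma_lam(G): infimum over all finite base sets S, f in F_lam and
   partitions X (with f(x^opt) > 0, i.e. f not identically zero) *)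
Definition gamma_lam (R : realType) (lam : R) n (e : rel 'I_n) : R :=
  inf [set g : R | exists (S : finType) (f : {set S} -> R) (X : 'I_n -> {set S}),
         [/\ in_F lam f, is_partition X, 0 < fopt f X & g = gamma_fXG f X e]]%classic.

(* \overline{P}(G;i), computed by structural recursion with fuel k;
   with fuel n (number of agents) the fuel never runs out, since every
   recursive call goes to a strictly smaller index. \max over an empty
   neighbourhood is 0, giving the value 1 when N_i is empty. *)
Fixpoint pbar_fuel n (e : rel 'I_n) (k : nat) (i : 'I_n) : nat :=
  if k is k'.+1 then
    (\max_(j : 'I_n | (j < i)%N && e j i) pbar_fuel e k' j).+1
  else 1%N.

Definition pbar n (e : rel 'I_n) (i : 'I_n) : nat := pbar_fuel e n i.

Definition in_Gnq n (q : nat) (e : rel 'I_n) :=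
  is_graph e /\ forall i : 'I_n, (pbar e i <= q)%N.

Definition eta_lam (R : realType) (lam : R) (n q : nat) : R :=
  sup [set g : R | exists e : rel 'I_n, in_Gnq q e /\ g = gamma_lam lam e]%classic.

(* distinct i, j adjacent iff i = j mod r (0-based labels; same relation
   as for the 1-based labels i+1, j+1) *)
Definition modgraph (n r : nat) : rel 'I_n :=
  fun i j => (i != j) && (i == j %[mod r])%N.
Arguments modgraph : clear implicits.

(* Main.v *)
Require Import Defs.
From HB Require Import structures.
From mathcomp Require Import classical_sets reals.
From mathcomp Require Import all_boot all_order all_algebra.
From mathcomp Require Import lra zify ring.
Import Order.TTheory GRing.Theory Num.Theory.
Local Open Scope ring_scope.
Set Implicit Arguments. Unset Strict Implicit. Unset Printing Implicit Defensive.

Lemma set_ind0 (T : finType) (P : {set T} -> Prop) :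
  P set0 -> (forall (a : T) (A : {set T}), a \notin A -> P A -> P (a |: A)) -> forall A, P A.
Proof.
move=> H0 HS A; move: {2}#|A| (erefl #|A|) => k; elim: k A => [|k IH] A hA.
  by rewrite (cards0_eq hA).
have : (0 < #|A|)%N by rewrite hA.
rewrite card_gt0 => /set0Pn [a aA].
rewrite -(setD1K aA); apply: HS; first by rewrite !inE eqxx.
apply: IH; move: hA; rewrite (cardsD1 a) aA /=; lia.
Qed.

Section SF.
Variables (R : realType) (S : finType) (lam : R) (f : {set S} -> R).
Hypothesis hf : in_F lam f.
Implicit Types (e : S) (A B : {set S}).

Lemma marg_mem e A : e \in A -> marg f [set e] A = 0.
Proof. by move=> eA; rewrite /marg (setUidPr _) ?subrr // sub1set. Qed.

Lemma marg_ge0 e A : 0 <= marg f [set e] A.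
Proof. by case: hf => _ _ hm _ _; apply: hm. Qed.

Lemma marg_sub e A B : A \subset B -> marg f [set e] B <= marg f [set e] A.
Proof.
move=> AB; have [eB|eB] := boolP (e \in B).
  by rewrite marg_mem // marg_ge0.
by case: hf => _ _ _ hs _; apply: hs.
Qed.

Lemma f_mono A B : A \subset B -> f A <= f B.
Proof.
move=> AB; rewrite -(setID B A) (setIidPr AB) setUC.
elim/set_ind0: (B :\: A) => [|a C _ IH]; first by rewrite set0U.
apply: (le_trans IH); rewrite -setUA; have := marg_ge0 a (C :|: A).
rewrite /marg; lra.
Qed.

Lemma f_single_bound e A : marg f [set e] A <= f [set e].
Proof.
have := marg_sub e (sub0set A); rewrite /marg setU0.
by case: hf => _ h0 _ _ _; rewrite h0 subr0.
Qed.

Lemma L1 n (o : {ffun 'I_n -> S}) B (M : {set 'I_n}) :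
  f (xset o M :|: B) <= f B + \sum_(i in M) marg f [set o i] B.
Proof.
elim/set_ind0: M => [|a M aM IH].
  by rewrite /xset imset0 set0U big_set0 addr0.
rewrite /xset imsetU1 big_setU1 //= -setUA.
have h1 : f (o a |: ([set o x | x in M] :|: B)) =
   f ([set o x | x in M] :|: B) + marg f [set o a] ([set o x | x in M] :|: B).
  by rewrite /marg; lra.
rewrite h1; have := marg_sub (o a) (subsetUr [set o x | x in M] B).
move: IH; rewrite /xset; lra.
Qed.

Lemma L2 n (x : {ffun 'I_n -> S}) B (M : {set 'I_n}) :
  (forall i j, x i = x j -> i = j) -> (forall i, i \in M -> x i \notin B) ->
  f B + (1 - lam) * \sum_(i in M) f [set x i] <= f (xset x M :|: B).
Proof.
move=> inj; elim/set_ind0: M => [|a M aM IH] hM.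
  by rewrite big_set0 mulr0 addr0 /xset imset0 set0U.
rewrite /xset imsetU1 big_setU1 //= -setUA.
have h1 : f (x a |: ([set x y | y in M] :|: B)) =
   f ([set x y | y in M] :|: B) + marg f [set x a] ([set x y | y in M] :|: B).
  by rewrite /marg; lra.
have hc : (1 - lam) * f [set x a] <= marg f [set x a] ([set x y | y in M] :|: B).
  case: hf => _ _ _ _ hc; apply: hc; rewrite !inE negb_or hM ?andbT ?inE ?eqxx //.
  apply/imsetP => -[y yM /inj ay]; by rewrite ay yM in aM.
have hM2 : forall i, i \in M -> x i \notin B by move=> i iM; apply: hM; rewrite inE iM orbT.
move: (IH hM2).
rewrite h1 /xset mulrDr; lra.
Qed.

End SF.

Lemma exists_argmax (R : realType) (T : finType) (A : {set T}) (F : T -> R) :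
  A != set0 -> exists2 y, y \in A & forall z, z \in A -> F z <= F y.
Proof.
case/set0Pn => y0 y0A.
case: (@arg_maxP _ R T y0 (mem A) F y0A) => yb ybA ybmax.
by exists yb => // z zA; apply: ybmax.
Qed.

Lemma greedy_exists (R : realType) (S : finType) n (f : {set S} -> R)
  (X : 'I_n -> {set S}) (e : rel 'I_n) :
  (forall i, X i != set0) -> exists x, is_greedy f X e x.
Proof.
move=> hX.
have y0 : forall i, {y | y \in X i}.
  by move=> i; exists (xchoose (elimT (set0Pn (X i)) (hX i))); apply: xchooseP.
suff : forall k, exists x : {ffun 'I_n -> S}, is_profile X x /\
  forall i : 'I_n, (i < k)%N -> forall y, y \in X i ->
    marg f [set y] (xset x (nbrs e i)) <= marg f [set x i] (xset x (nbrs e i)).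
  by case/(_ n) => x [px hx]; exists x; split => // i y; apply: hx.
elim=> [|k [x [px hx]]].
  exists [ffun i => sval (y0 i)]; split => [|i //]; apply/forallP => i; rewrite ffunE; exact: (svalP (y0 i)).

case: (ltnP k n) => hk; last first.
  by exists x; split => // i _ y yX; apply: hx => //; apply: leq_trans (ltn_ord i) hk.
pose kk : 'I_n := Ordinal hk.
pose N := xset x (nbrs e kk).
case: (exists_argmax (fun y => marg f [set y] N) (hX kk)) => yb ybX ybmax.
pose x' := [ffun i => if i == kk then yb else x i].
have key : forall i : 'I_n, (i <= k)%N -> xset x' (nbrs e i) = xset x (nbrs e i).
  move=> i ik; apply: eq_in_imset => j; rewrite inE => /andP [ji _].
  rewrite ffunE ifN //; apply/eqP => jk; move: ji; rewrite jk /=; lia.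
exists x'; split.
  apply/forallP => i; rewrite ffunE; case: eqP => [->|_] //.
  by move/forallP: px; apply.
move=> i ik y yX; rewrite key // ffunE.
case: eqP => [ik'|ik'].
  by move: yX; rewrite ik' => yX; apply: ybmax.
apply: hx => //; have : (nat_of_ord i != k).
  by apply/eqP => h; apply: ik'; apply: val_inj.
move: ik; lia.
Qed.

Lemma part_inj (S : finType) n (X : 'I_n -> {set S})
  (x o : {ffun 'I_n -> S}) i j :
  is_partition X -> is_profile X x -> is_profile X o -> x i = o j -> i = j.
Proof.
case=> _ hd _ /forallP px /forallP po hij.
case: (eqVneq i j) => // /hd dij.
by move: (disjointFr dij (px i)); rewrite hij po.
Qed.

Section Lower.
Variables (R : realType) (S : finType) (lam : R) (f : {set S} -> R).
Variables (n r : nat) (X : 'I_n -> {set S}) (x : {ffun 'I_n -> S}).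
Hypotheses (hf : in_F lam f) (hlam : 0 < lam < 1) (hr : (0 < r)%N) (hX : is_partition X)
  (hx : is_greedy f X (modgraph n r) x).

Let g i := marg f [set x i] (xset x (nbrs (modgraph n r) i)).
Let Cl (c : nat) := [set i : 'I_n | (i %% r == c)%N].

Lemma tele c : \sum_(i in Cl c) g i = f (xset x (Cl c)).
Proof.
pose Ck k := [set i : 'I_n | (i < k)%N && (i %% r == c)%N].
suff : forall k, \sum_(i in Ck k) g i = f (xset x (Ck k)).
  have <- : Ck n = Cl c by apply/setP => i; rewrite !inE ltn_ord.
  by apply.
elim=> [|k IH].
  have -> : Ck 0%N = set0 by apply/setP => i; rewrite !inE.
  by rewrite big_set0 /xset imset0; case: hf => _ h0 _ _ _; rewrite h0.
case: (ltnP k n) => hk; last first.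
  have -> : Ck k.+1 = Ck k.
    by apply/setP => i; rewrite !inE; have := ltn_ord i; case: (i %% r == c)%N; lia.
  exact: IH.
pose kk : 'I_n := Ordinal hk.
case: (boolP (k %% r == c)%N) => hc; last first.
  have -> : Ck k.+1 = Ck k.
    apply/setP => i; rewrite !inE ltnS leq_eqVlt.
    case: (eqVneq (nat_of_ord i) k) => [ik|ik] /=; last by [].
    by rewrite ik (negbTE hc) !andbF.
  exact: IH.
have hCk : Ck k.+1 = kk |: Ck k.
  apply/setP => i; rewrite !inE ltnS leq_eqVlt -val_eqE /=.
  by case: (eqVneq (nat_of_ord i) k) => [->|] /=; rewrite ?hc ?ltnn.
have kkn : kk \notin Ck k by rewrite inE ltnn.
have hN : nbrs (modgraph n r) kk = Ck k.
  apply/setP => i; rewrite !inE /modgraph /=.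
  case: (ltnP i k) => ik //=.
  have -> : (i != kk) by rewrite -val_eqE /= neq_ltn ik.
  by rewrite /= (eqP hc).
rewrite hCk big_setU1 //= /xset imsetU1 IH /g hN /marg /xset; lra.
Qed.


Let x_inj i j : x i = x j -> i = j.
Proof. by case: hx => px _; apply: (part_inj hX px px). Qed.

Lemma hB : (r%:R - (r%:R - 1) * lam) * (\sum_(i in [set: 'I_n]) g i)
             <= r%:R * f (xset x [set: 'I_n]).
Proof.
set G := \sum_(i in [set: 'I_n]) g i.
have hc0 : forall c : 'I_r, (1 - lam) * G + lam * (\sum_(i in Cl c) g i)
                            <= f (xset x [set: 'I_n]).
  move=> c.
  have h1 := L2 hf (B:=xset x (Cl c)) (M:= ~: Cl c) x_inj.
  have h2 : (forall i, i \in ~: Cl c -> x i \notin xset x (Cl c)).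
    move=> i; rewrite in_setC => iC; apply/imsetP => -[j jC /x_inj ij].
    by rewrite ij jC in iC.
  move: (h1 h2); rewrite /xset -imsetU setUC setUCr.
  have h3 : \sum_(i in ~: Cl c) g i <= \sum_(i in ~: Cl c) f [set x i].
    by apply: ler_sum => i _; exact: (f_single_bound hf).
  have h4 : G = \sum_(i in Cl c) g i + \sum_(i in ~: Cl c) g i.
    by rewrite /G (big_setID (Cl c)) setTI setTD.
  rewrite -/(xset x (Cl c)) -tele => h5.
  have : (1 - lam) * (\sum_(i in ~: Cl c) g i) <= (1 - lam) * (\sum_(i in ~: Cl c) f [set x i]).
    by apply: ler_wpM2l => //; case/andP: hlam => _ ?; lra.
  rewrite h4 mulrDr; lra.
have hsum : \sum_(c : 'I_r) \sum_(i in Cl c) g i = G.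
  rewrite /G (partition_big (fun i : 'I_n => Ordinal (ltn_pmod i hr)) xpredT) //=.
  apply: eq_bigr => c _; apply: eq_bigl => i; rewrite !inE -val_eqE /=.
  by [].
have := @ler_sum _ _ (index_enum 'I_r) xpredT _ _ (fun c _ => hc0 c).
rewrite big_split /= -mulr_sumr -[\sum_(_ < r) lam * _]mulr_sumr hsum !sumr_const card_ord.
rewrite -[G *+ r]mulr_natr -[f _ *+ r]mulr_natr => H.
have -> : (r%:R - (r%:R - 1) * lam) * G = (1 - lam) * (G * r%:R) + lam * G by ring.
by rewrite [_ * f _]mulrC.
Qed.

Lemma hA (o : {ffun 'I_n -> S}) : is_profile X o ->
  f (xset o [set: 'I_n]) <= f (xset x [set: 'I_n]) + lam * \sum_(i in [set: 'I_n]) g i.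
Proof.
move=> po; case: hx => px hgr; have [l0 l1] := andP hlam.
set Os := xset o [set: 'I_n]; set Xs := xset x [set: 'I_n].
set G := \sum_(i in [set: 'I_n]) g i.
pose D := [set i | x i \notin Os].
have h1 := L2 hf (B:=Os) (M:=D) x_inj.
have h1' : (forall i, i \in D -> x i \notin Os) by move=> i; rewrite inE.
move: (h1 h1') => {h1 h1'} h1.
have h2 : f (xset x D :|: Os) <= f (Xs :|: Os).
  by apply: (f_mono hf); apply: setSU; apply: imsetS; apply: subsetT.
have h3 := L1 hf o Xs [set: 'I_n].
rewrite -/Os setUC in h3.
have h4 : \sum_(i in [set: 'I_n]) marg f [set o i] Xs <= \sum_(i in D) g i.
  rewrite (big_setID D) setTI setTD.
  have -> : \sum_(i in ~: D) marg f [set o i] Xs = 0.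
    apply: big1 => i; rewrite in_setC inE negbK => /imsetP [j _ xo].
    have ij := part_inj hX px po xo; subst j.
    rewrite -xo marg_mem //; apply: imset_f; exact: in_setT.
  rewrite /= addr0; apply: ler_sum => i _.
  apply: le_trans (hgr i (o i) _); last by move/forallP: po; apply.
  apply: (marg_sub hf); apply: imsetS; apply: subsetT.
have h5 : \sum_(i in D) g i <= \sum_(i in D) f [set x i].
  by apply: ler_sum => i _; exact: (f_single_bound hf).
have h6 : \sum_(i in D) g i <= G.
  rewrite /G [X in _ <= X](big_setID D) setTI setTD /= lerDl; apply: sumr_ge0 => i _.
  exact: (marg_ge0 hf).
have h7 : 0 <= (1 - lam) * (\sum_(i in D) f [set x i] - \sum_(i in D) g i).
  by apply: mulr_ge0; rewrite subr_ge0 // ltW.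
have h8 : 0 <= lam * (G - \sum_(i in D) g i).
  by apply: mulr_ge0; rewrite ?subr_ge0 // ltW.
move: h7 h8; rewrite !mulrBr => h7 h8.
move: h1 h2 h3 h4 h5 h6 h7 h8.
set SD := \sum_(i in D) g i. set SF := \sum_(i in D) f [set x i].
set SO := \sum_(i in [set: 'I_n]) marg f [set o i] Xs.
set fO := f Os. set fX := f Xs. set f1 := f (xset x D :|: Os). set f2 := f (Xs :|: Os).
clearbody SD SF SO fO fX f1 f2 G.
move=> *; lra.
Qed.

Lemma lower_main (o : {ffun 'I_n -> S}) : is_profile X o ->
  (r%:R - (r%:R - 1) * lam) * f (xset o [set: 'I_n])
    <= (r%:R + lam) * f (xset x [set: 'I_n]).
Proof.
move=> po; have ha := hA po; have hb := hB.
set a := f (xset o [set: 'I_n]) in ha *; set b := f (xset x [set: 'I_n]) in ha hb *.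
set G := \sum_(i in [set: 'I_n]) g i in ha hb.
set c := (r%:R - (r%:R - 1) * lam) in hb *.
have hc : 0 <= c.
  rewrite /c; have : (1 <= r%:R :> R) by rewrite ler1n.
  case/andP: hlam => ? ?; nra.
have h1 : c * a <= c * (b + lam * G) by apply: ler_wpM2l.
have h2 : lam * (c * G) <= lam * (r%:R * b).
  by apply: ler_wpM2l => //; case/andP: hlam => ? ?; lra.
have -> : (r%:R + lam) * b = c * b + lam * (r%:R * b) by rewrite /c; ring.
move: h1 h2; rewrite mulrDr; lra.
Qed.

End Lower.

Lemma fopt_ge (R : realType) (S : finType) n (f : {set S} -> R) (X : 'I_n -> {set S}) x :
  is_profile X x -> fval f x <= fopt f X.
Proof. by move=> px; rewrite /fopt; apply: (le_bigmax_cond _ _ px). Qed.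

Lemma fopt_le (R : realType) (S : finType) n (f : {set S} -> R) (X : 'I_n -> {set S}) c :
  0 <= c -> (forall o, is_profile X o -> fval f o <= c) -> fopt f X <= c.
Proof. by move=> c0 h; rewrite /fopt; apply: bigmax_le. Qed.

Lemma gamma_lower (R : realType) (S : finType) (lam : R) (f : {set S} -> R) n r
  (X : 'I_n -> {set S}) :
  in_F lam f -> 0 < lam < 1 -> (0 < r)%N -> is_partition X -> 0 < fopt f X ->
  (r%:R - (r%:R - 1) * lam) / (r%:R + lam) <= gamma_fXG f X (modgraph n r).
Proof.
move=> hf hlam hr hX hfo; have [l0 l1] := andP hlam.
have hX0 : forall i, X i != set0 by case: hX.
apply: lb_le_inf.
  case: (greedy_exists f (modgraph n r) hX0) => x hx.
  by exists (fval f x / fopt f X); exists x.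
move=> y [x hx <-].
have hrl : 0 < r%:R + lam :> R by rewrite ltr_wpDl // ler0n.
have hc : 0 < r%:R - (r%:R - 1) * lam :> R.
  have : (1 <= r%:R :> R) by rewrite ler1n.
  move=> h1; nra.
have hfv : 0 <= fval f x by case: hf => hn _ _ _ _; apply: hn.
have key : fopt f X <= (r%:R + lam) / (r%:R - (r%:R - 1) * lam) * fval f x.
  apply: fopt_le; first by apply: mulr_ge0 => //; apply: divr_ge0; apply: ltW.
  move=> o po; rewrite mulrAC ler_pdivlMr //.
  by rewrite mulrC; exact: (lower_main hf hlam hr hX hx po).
rewrite ler_pdivlMr // mulrAC ler_pdivrMr //.
move: key; rewrite mulrAC ler_pdivlMr // => key.
by rewrite mulrC [fval f x * _]mulrC.
Qed.

Lemma cardU1I (T : finType) (C A : {set T}) e :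
  e \notin A -> #|(e |: A) :&: C| = ((e \in C) + #|A :&: C|)%N.
Proof.
move=> eA; rewrite setIUl; case eC: (e \in C).
  have -> : [set e] :&: C = [set e] by apply/setIidPl; rewrite sub1set.
  by rewrite cardsU1 inE (negbTE eA).
have -> : [set e] :&: C = set0.
  by apply/setP => p; rewrite !inE; case: eqP => // ->; rewrite eC.
by rewrite set0U.
Qed.

Section Example.
Variables (R : realType) (lam : R) (n : nat) (e : rel 'I_n) (I : {set 'I_n}).
Hypotheses (hlam : 0 < lam < 1)
  (hind : forall i j, i \in I -> j \in I -> (j < i)%N -> e j i = false).

Definition TT := ('I_n * bool)%type.
Definition PP : {set TT} := [set p : TT | (p.1 \in I) && p.2].
Definition QQ : {set TT} := [set p : TT | (p.1 \in I) && ~~ p.2].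
Definition phi (k : nat) : R := if k is 0 then 0 else lam + (1 - lam) * k%:R.
Definition inc (k : nat) : R := if k is 0 then 1 else 1 - lam.
Definition fex (A : {set TT}) : R := phi #|A :&: PP| + (#|A :&: QQ|)%:R.
Definition Xex (i : 'I_n) : {set TT} := [set (i, true); (i, false)].

Lemma phiS k : phi k.+1 = phi k + inc k.
Proof. by case: k => [|k] /=; rewrite ?natrS; ring. Qed.

Lemma phiD (b : bool) k : phi (b + k) = phi k + b%:R * inc k.
Proof. by case: b; [rewrite add1n phiS mul1r | rewrite add0n mul0r addr0]. Qed.

Lemma inc_bounds k : 1 - lam <= inc k <= 1.
Proof. by have [l0 l1] := andP hlam; case: k => [|k] /=; apply/andP; split; lra. Qed.

Lemma inc_anti k k' : (k <= k')%N -> inc k' <= inc k.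
Proof.
have [l0 l1] := andP hlam.
by case: k => [|k]; case: k' => [|k'] //= _; lra.
Qed.

Lemma phi_ge0 k : 0 <= phi k.
Proof.
have [l0 l1] := andP hlam; case: k => [|k] //=.
by apply: addr_ge0; [lra | apply: mulr_ge0; [lra | apply: ler0n]].
Qed.

Lemma marg_fex y (A : {set TT}) : y \notin A ->
  marg fex [set y] A = (y \in PP)%:R * inc #|A :&: PP| + (y \in QQ)%:R.
Proof.
move=> yA; rewrite /marg /fex !cardU1I // phiD natrD; ring.
Qed.

Lemma fex0 : fex set0 = 0.
Proof. by rewrite /fex !finset.set0I !cards0 /= addr0. Qed.

Lemma fex_in_F : in_F lam fex.
Proof.
have [l0 l1] := andP hlam.
have mono : forall y (A : {set TT}), 0 <= marg fex [set y] A.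
  move=> y A; case: (boolP (y \in A)) => yA.
    by rewrite marg_mem.
  rewrite marg_fex //; apply: addr_ge0; last exact: ler0n.
  apply: mulr_ge0; first exact: ler0n.
  by case/andP: (inc_bounds #|A :&: PP|) => h _; lra.
split.
- by move=> A; rewrite /fex; apply: addr_ge0; [apply: phi_ge0 | apply: ler0n].
- exact: fex0.
- exact: mono.
- move=> A B y AB yB.
  have yA : y \notin A by apply: contra yB; apply: (subsetP AB).
  rewrite !marg_fex // lerD2r; apply: ler_wpM2l; first exact: ler0n.
  by apply: inc_anti; apply: subset_leq_card; apply: setSI.
- move=> y A yA.
  have -> : fex [set y] = marg fex [set y] set0 by rewrite /marg setU0 fex0 subr0.
  rewrite !marg_fex ?in_set0 // finset.set0I cards0 /=.
  have := inc_bounds #|A :&: PP|; case/andP => h1 h2.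
  case: (y \in PP); case: (y \in QQ); rewrite /= ?mulr1 ?mulr0 ?mul1r ?mul0r; lra.
Qed.

Lemma Xex_part : is_partition Xex.
Proof.
split.
- by move=> i; apply/set0Pn; exists (i, true); rewrite !inE eqxx.
- move=> i j ij; rewrite -setI_eq0; apply/eqP/setP => -[k b]; rewrite !inE !xpair_eqE.
  case: (eqVneq k i) => [ki|ki] /=; last by [].
  case: (eqVneq k j) => [kj|kj] /=; last by rewrite !andbF.
  by move: ij; rewrite -ki -kj eqxx.
- by move=> [k b]; exists k; rewrite !inE !xpair_eqE eqxx; case: b.
Qed.

Definition x0 : {ffun 'I_n -> TT} := [ffun i => (i, true)].
Definition o0 : {ffun 'I_n -> TT} := [ffun i => (i, false)].

Lemma marg_greedy i (y : TT) : y.1 = i ->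
  marg fex [set y] (xset x0 (nbrs e i)) = (i \in I)%:R.
Proof.
case: y => k b /= ->.
have yN : (i, b) \notin xset x0 (nbrs e i).
  apply/imsetP => -[j]; rewrite inE ffunE => /andP [ji _] [ij _].
  by move: ji; rewrite -ij ltnn.
rewrite marg_fex //.
case: (boolP (i \in I)) => iI; last by rewrite !inE (negbTE iI) /= mul0r addr0.
have -> : xset x0 (nbrs e i) :&: PP = set0.
  apply/setP => p; rewrite !inE; apply/negbTE; apply/andP => -[/imsetP [j jN ->]].
  rewrite ffunE /= andbT => jI; move: jN; rewrite inE => /andP [ji eji].
  by rewrite hind in eji.
clear yN; rewrite cards0 /= !inE iI /= mulr1.
by case: b; rewrite /= ?mulr1n ?mulr0n ?addr0 ?add0r.
Qed.

Lemma x0_greedy : is_greedy fex Xex e x0.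
Proof.
split.
  by apply/forallP => i; rewrite ffunE !inE eqxx.
move=> i y; rewrite !inE => hy.
rewrite !marg_greedy // ?ffunE //.
by case/orP: hy => /eqP ->.
Qed.

Lemma x0_profile : is_profile Xex o0.
Proof. by apply/forallP => i; rewrite ffunE !inE eqxx orbT. Qed.

Lemma fval_x0 : fval fex x0 = phi #|I|.
Proof.
rewrite /fval /fex.
have -> : xset x0 [set: 'I_n] :&: QQ = set0.
  by apply/setP => p; rewrite !inE; apply/negbTE; apply/andP => -[/imsetP [j _ ->]]; rewrite ffunE /= andbF.
have -> : xset x0 [set: 'I_n] :&: PP = [set (j, true) | j in I].
  apply/setP => p; rewrite !inE; apply/andP/imsetP.
    by case=> [/imsetP [j _ ->]]; rewrite ffunE /= andbT => jI; exists j.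
  by case=> j jI ->; split; [apply/imsetP; exists j; rewrite ?ffunE | rewrite /= jI].
by rewrite card_imset ?cards0 ?addr0 // => a b [].
Qed.

Lemma fval_o0 : fval fex o0 = (#|I|)%:R.
Proof.
rewrite /fval /fex.
have -> : xset o0 [set: 'I_n] :&: PP = set0.
  by apply/setP => p; rewrite !inE; apply/negbTE; apply/andP => -[/imsetP [j _ ->]]; rewrite ffunE /= andbF.
have -> : xset o0 [set: 'I_n] :&: QQ = [set (j, false) | j in I].
  apply/setP => p; rewrite !inE; apply/andP/imsetP.
    by case=> [/imsetP [j _ ->]]; rewrite ffunE /= andbT => jI; exists j.
  by case=> j jI ->; split; [apply/imsetP; exists j; rewrite ?ffunE | rewrite /= jI].
by rewrite card_imset ?cards0 ?add0r // => a b [].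
Qed.

End Example.

Lemma gamma_lb_set (R : realType) (S : finType) (lam : R) (f : {set S} -> R) n
  (X : 'I_n -> {set S}) (e : rel 'I_n) :
  in_F lam f -> 0 < fopt f X ->
  has_lbound [set fval f x / fopt f X | x in [set x | is_greedy f X e x]]%classic.
Proof.
move=> hf hfo; exists 0 => y [x _ <-].
by apply: divr_ge0; [case: hf => hn _ _ _ _; apply: hn | apply: ltW].
Qed.

Lemma gamma_ge0 (R : realType) (S : finType) (lam : R) (f : {set S} -> R) n
  (X : 'I_n -> {set S}) (e : rel 'I_n) :
  in_F lam f -> is_partition X -> 0 < fopt f X -> 0 <= gamma_fXG f X e.
Proof.
move=> hf hX hfo; apply: lb_le_inf.
  have hX0 : forall i, X i != set0 by case: hX.
  case: (greedy_exists f e hX0) => x hx.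
  by exists (fval f x / fopt f X); exists x.
move=> y [x _ <-].
by apply: divr_ge0; [case: hf => hn _ _ _ _; apply: hn | apply: ltW].
Qed.

Lemma gamma_le (R : realType) (S : finType) (lam : R) (f : {set S} -> R) n
  (X : 'I_n -> {set S}) (e : rel 'I_n) x :
  in_F lam f -> 0 < fopt f X -> is_greedy f X e x ->
  gamma_fXG f X e <= fval f x / fopt f X.
Proof.
move=> hf hfo hx; apply: (ge_inf (gamma_lb_set e hf hfo)).
by exists x.
Qed.

Lemma example_gamma (R : realType) (lam : R) n (e : rel 'I_n) (I : {set 'I_n}) :
  0 < lam < 1 ->
  (forall i j, i \in I -> j \in I -> (j < i)%N -> e j i = false) ->
  (0 < #|I|)%N ->
  [/\ in_F lam (fex lam I), is_partition (@Xex n), 0 < fopt (fex lam I) (@Xex n)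
    & gamma_fXG (fex lam I) (@Xex n) e <= phi lam #|I| / #|I|%:R].
Proof.
move=> hlam hind hI.
have hF := fex_in_F I hlam.
have hm : 0 < #|I|%:R :> R by rewrite ltr0n.
have hfo : #|I|%:R <= fopt (fex lam I) (@Xex n).
  by rewrite -(fval_o0 lam I); apply: fopt_ge; apply: x0_profile.
have hfo' : 0 < fopt (fex lam I) (@Xex n) by apply: lt_le_trans hfo.
split => //; first exact: Xex_part.
apply: le_trans (gamma_le hF hfo' (x0_greedy lam hind)) _.
rewrite fval_x0 ler_pdivrMr // mulrAC ler_pdivlMr //.
apply: ler_wpM2l => //; exact: phi_ge0.
Qed.

Lemma pbar_stable n (e : rel 'I_n) k k' (i : 'I_n) :
  (i < k)%N -> (k <= k')%N -> pbar_fuel e k' i = pbar_fuel e k i.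
Proof.
elim: k k' i => [|k IH] k' i //.
case: k' => [|k'] // ik kk' /=.
congr S; apply: eq_bigr => j /andP [ji _]; apply: IH => //.
by apply: leq_trans ji _.
Qed.

Lemma pbar_gt n (e : rel 'I_n) (i j : 'I_n) :
  (j < i)%N -> e j i -> (pbar e j < pbar e i)%N.
Proof.
move=> ji eji; rewrite /pbar.
rewrite (@pbar_stable _ e i.+1 n i) ?ltn_ord //.
rewrite (@pbar_stable _ e i n j) //; last by apply: ltnW; apply: ltn_ord.
rewrite /= ltnS.
apply: (@leq_bigmax_cond _ (fun j : 'I_n => (j < i)%N && e j i) (fun j => pbar_fuel e i j) j); by rewrite ji eji.
Qed.

Lemma pbar_ge1 n (e : rel 'I_n) k i : (0 < pbar_fuel e k i)%N.
Proof. by case: k. Qed.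

Lemma pbar_mod n r (i : 'I_n) : (0 < r)%N ->
  pbar (modgraph n r) i = (i %/ r).+1.
Proof.
move=> hr; rewrite /pbar.
suff : forall k (i : 'I_n), (i %/ r < k)%N -> pbar_fuel (modgraph n r) k i = (i %/ r).+1.
  apply; have := ltn_ord i; move: (leq_div i r); lia.
elim=> [|k IH] {}i // hk /=; congr S.
apply/eqP; rewrite eqn_leq; apply/andP; split.
  apply/bigmax_leqP => j /andP [ji] /andP [_ /eqP hm].
  have hjr : (j %/ r < i %/ r)%N.
    rewrite -(ltn_pmul2r hr) -(ltn_add2r (i %% r)).
    by rewrite -{1}hm -!divn_eq.

  rewrite IH //; lia.
case: (posnP (i %/ r)) => [-> //|hpos].
have rle : (r <= i)%N by rewrite -divn_gt0.
have hi : nat_of_ord i = (i - r + r)%N by rewrite subnK.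
have hjn : (i - r < n)%N by apply: leq_ltn_trans (leq_subr r i) (ltn_ord i).
pose jj : 'I_n := Ordinal hjn.
have hdiv : (i %/ r = (i - r) %/ r + 1)%N.
  by rewrite {1}hi divnDr ?dvdnn // divnn hr.
have hP : (jj < i)%N && modgraph n r jj i.
  have hlt : (i - r < i)%N by move: rle hr; lia.
  rewrite /= /modgraph -val_eqE /= hlt neq_ltn hlt /=.
  by apply/eqP; rewrite {2}hi modnDr.
apply: leq_trans (@leq_bigmax_cond _ _ (fun j => pbar_fuel (modgraph n r) k j) jj hP).
rewrite IH /=; lia.
Qed.

Lemma indep_exists n q (e : rel 'I_n) : (1 <= q)%N -> in_Gnq q e ->
  exists I : {set 'I_n}, (n <= q * #|I|)%N /\
    (forall i j, i \in I -> j \in I -> (j < i)%N -> e j i = false).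
Proof.
case: q => [//|q'] _ [hg hq].
pose p (i : 'I_n) : 'I_q'.+1 := inord (pbar e i).-1.
pose L (l : 'I_q'.+1) := [set i | p i == l].
have hsum : n = (\sum_(l < q'.+1) #|L l|)%N.
  have h1 : n = (\sum_(i in 'I_n) 1)%N by rewrite sum1_card card_ord.
  rewrite {1}h1 (partition_big p xpredT) //=.
  apply: eq_bigr => l _; rewrite -sum1_card; apply: eq_bigl => i.
  by rewrite !inE.
have hc : (0 < #|'I_q'.+1|)%N by rewrite card_ord.
case: (@bigop.eq_bigmax _ (fun l => #|L l|) hc) => l0 hl0.
exists (L l0); split.
  rewrite {1}hsum -hl0.
  have H : (\sum_(l < q'.+1) #|L l| <= \sum_(l < q'.+1) \max_i #|L i|)%N.
    by apply: leq_sum => l _; apply: (leq_bigmax (F:=fun l => #|L l|)).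
  apply: leq_trans H _.
  by rewrite big_const_ord iter_addn_0 mulnC.
move=> i j; rewrite !inE => /eqP hi /eqP hj ji.
apply/negbTE/negP => eji.
have := pbar_gt ji eji.
have : p i = p j by rewrite hi hj.
rewrite /p => /(congr1 val); rewrite /= !inordK ?ltnS; last 2 first.
- by have := hq j; lia.
- by have := hq i; lia.
have := pbar_ge1 e n i; have := pbar_ge1 e n j; rewrite /pbar; lia.
Qed.

Lemma gamma_lam_lb_set (R : realType) (lam : R) n (e : rel 'I_n) :
  has_lbound [set g : R | exists (S : finType) (f : {set S} -> R) (X : 'I_n -> {set S}),
         [/\ in_F lam f, is_partition X, 0 < fopt f X & g = gamma_fXG f X e]]%classic.
Proof.
exists 0 => y [S [f [X [hf hX hfo ->]]]].
exact: (gamma_ge0 e hf hX hfo).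
Qed.

Lemma gamma_lam_nonempty (R : realType) (lam : R) n (e : rel 'I_n) :
  (0 < n)%N -> 0 < lam < 1 ->
  ([set g : R | exists (S : finType) (f : {set S} -> R) (X : 'I_n -> {set S}),
         [/\ in_F lam f, is_partition X, 0 < fopt f X & g = gamma_fXG f X e]] !=set0)%classic.
Proof.
move=> hn hlam.
pose i0 : 'I_n := Ordinal hn.
have hind : forall i j, i \in [set i0] -> j \in [set i0] -> (j < i)%N -> e j i = false.
  by move=> i j; rewrite !inE => /eqP -> /eqP ->; rewrite ltnn.
have hc1 : (0 < #|[set i0]|)%N by rewrite cards1.
have [hF hX hfo _] := @example_gamma R lam n e [set i0] hlam hind hc1.
by exists (gamma_fXG (fex lam [set i0]) (@Xex n) e); exists (TT n), (fex lam [set i0]), (@Xex n).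
Qed.

Lemma gamma_lam_upper (R : realType) (lam : R) n q (e : rel 'I_n) (r : nat) :
  (1 <= q)%N -> (q <= n)%N -> 0 < lam < 1 -> in_Gnq q e ->
  r = ((n + q - 1) %/ q)%N ->
  gamma_lam lam e <= (r%:R - (r%:R - 1) * lam) / r%:R.
Proof.
move=> hq hqn hlam hG hrdef; have [l0 l1] := andP hlam.
case: (indep_exists hq hG) => I [hI hind].
have hr : (0 < r)%N by rewrite hrdef divn_gt0; lia.
have hrI : (r <= #|I|)%N.
  rewrite hrdef -ltnS ltn_divLR //; nia.
have hI0 : (0 < #|I|)%N by apply: leq_trans hr hrI.
have [hF hX hfo hg] := @example_gamma R lam n e I hlam hind hI0.
have H := ge_inf (gamma_lam_lb_set lam e).
apply: (le_trans (H (gamma_fXG (fex lam I) (@Xex n) e) _)).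
  by exists (TT n), (fex lam I), (@Xex n).
apply: le_trans hg _.
have hm : 0 < #|I|%:R :> R by rewrite ltr0n.
have hrR : 0 < r%:R :> R by rewrite ltr0n.
have hrm : r%:R <= #|I|%:R :> R by rewrite ler_nat.
rewrite ler_pdivrMr // mulrAC ler_pdivlMr //.
move: hm hrm; case: #|I| hI0 => [//|m] _ hm hrm /=.
rewrite -subr_ge0.
have -> : (r%:R - (r%:R - 1) * lam) * m.+1%:R - (lam + (1 - lam) * m.+1%:R) * r%:R
          = lam * (m.+1%:R - r%:R) by ring.
by apply: mulr_ge0; [apply: ltW | rewrite subr_ge0].
Qed.

Unset Implicit Arguments.
Theorem theorem3 (R : realType) (n q : nat) (lam : R) :
  (1 <= q)%N -> (q <= n)%N -> 0 < lam < 1 ->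
  let r : nat := ((n + q - 1) %/ q)%N in
  [/\ eta_lam lam n q <= (r%:R - (r%:R - 1) * lam) / r%:R,
      (r%:R - (r%:R - 1) * lam) / (r%:R + lam) <= eta_lam lam n q,
      in_Gnq q (modgraph n r),
      (forall i : 'I_n, pbar (modgraph n r) i = ((i.+1 + r - 1) %/ r)%N)
    & (r%:R - (r%:R - 1) * lam) / (r%:R + lam) <= gamma_lam lam (modgraph n r)].
Proof.
move=> hq hqn hlam r.
have hn : (0 < n)%N by apply: leq_trans hq hqn.
have hr : (0 < r)%N by rewrite /r divn_gt0; lia.
have hqr : (n <= q * r)%N.
  have h1 := divn_eq (n + q - 1) q; have h2 := ltn_pmod (n + q - 1) hq.
  rewrite -/r in h1; nia.
have hpbar : forall i : 'I_n, pbar (modgraph n r) i = ((i.+1 + r - 1) %/ r)%N.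
  move=> i; rewrite pbar_mod //.
  have -> : (i.+1 + r - 1 = i + r)%N by lia.
  by rewrite divnDr ?dvdnn // divnn hr addn1.
have hG : in_Gnq q (modgraph n r).
  split; first split.
  - by move=> i j; rewrite /modgraph eq_sym [X in _ && X]eq_sym.
  - by move=> i; rewrite /modgraph eqxx.
  - move=> i; rewrite pbar_mod // ltn_divLR //; have := ltn_ord i; nia.
have hupper : forall e : rel 'I_n, in_Gnq q e ->
    gamma_lam lam e <= (r%:R - (r%:R - 1) * lam) / r%:R.
  move=> e he; exact: (@gamma_lam_upper R lam n q e r hq hqn hlam he erefl).
have hlow : (r%:R - (r%:R - 1) * lam) / (r%:R + lam) <= gamma_lam lam (modgraph n r).
  apply: lb_le_inf; first exact: gamma_lam_nonempty.
  move=> y [S [f [X [hf hX hfo ->]]]]; exact: gamma_lower.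
split => //.
- apply: ge_sup.
    by exists (gamma_lam lam (modgraph n r)); exists (modgraph n r).
  by move=> y [e [he ->]]; apply: hupper.
- apply: le_trans hlow _; apply: ub_le_sup.
    exists ((r%:R - (r%:R - 1) * lam) / r%:R) => y [e [he ->]]; exact: hupper.
  by exists (modgraph n r).
Qed.
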